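(* Let $\omega$ be an attack cycle. For $k\ge 0$, the probability that $\omega$ is won by the attacker and $L(\omega)=k$ equals $\pi_k$. For $k\ge 2$, the probability that $\omega$ is won by the attacker and $L(\omega)\le k$ equals $pq^2+pq^2C_{k-2}(pq)$.
   Context: Honest hashrate $p$, attacker hashrate $q$, $p+q=1$, $0<q<p$. Attack cycles are words in S (attacker block) and H (honest block): H, SHS, SHH, or SSwH with $w$ a Dyck word over $\{S,H\}$ (S up-step, H down-step); with $|w|$ half the length of $w$: $\mathbb{P}[H]=p$, $\mathbb{P}[SHS]=pq^2$, $\mathbb{P}[SHH]=p^2q$, $\mathbb{P}[SSwH]=q^2p(pq)^{|w|}$. $L(\omega)$ is the number of blocks added to the official chain: $L(H)=1$, $L(SHS)=L(SHH)=2$, $L(SSwH)=|w|+2$. The cycle is won by the attacker if $\omega=SHS$ or $\omega$ starts with SS. $C_n=\frac{(2n)!}{n!(n+1)!}$ is the $n$-th Catalan number and $C_n(x)=\sum_{k=0}^nC_kx^k$. Set $\pi_0=\pi_1=0$ and for $k\ge2$, $\pi_k=pq^2\bigl(\mathbf 1_{k=2}+(pq)^{k-2}C_{k-2}\bigr)$. *)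

(* Defs.v *)
From HB Require Import structures.
From mathcomp Require Import all_boot all_order all_algebra.
From mathcomp Require Import all_classical all_reals all_analysis.
Set Implicit Arguments. Unset Strict Implicit. Unset Printing Implicit Defensive.
Import Order.TTheory GRing.Theory Num.Theory.
Import numFieldNormedType.Exports.
Local Open Scope classical_set_scope.
Local Open Scope ring_scope.

(* Blocks: S (attacker) = true, H (honest) = false. Words are seq bool. *)
Definition S : bool := true.
Definition H : bool := false.

Fixpoint dyck_from (h : nat) (w : seq bool) : bool :=
  match w with
  | [::] => h == 0%N
  | b :: w' => if b then dyck_from h.+1 w'
               else if h is h'.+1 then dyck_from h' w' else false
  end.
Definition dyck (w : seq bool) : bool := dyck_from 0 w.

Definition inner (om : seq bool) : seq bool := take (size om - 3) (drop 2 om).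

Definition is_SSwH (om : seq bool) : bool :=
  [&& (2 < size om)%N, take 2 om == [:: S; S], last S om == H & dyck (inner om)].

Definition is_cycle (om : seq bool) : bool :=
  [|| om == [:: H], om == [:: S; H; S], om == [:: S; H; H] | is_SSwH om].

Definition half_len (w : seq bool) : nat := (size w)./2.

Definition cycle_prob {R : realType} (p q : R) (om : seq bool) : R :=
  if om == [:: H] then p
  else if om == [:: S; H; S] then p * q ^+ 2
  else if om == [:: S; H; H] then p ^+ 2 * q
  else q ^+ 2 * p * (p * q) ^+ half_len (inner om).

(* L(om): number of blocks added to the official chain *)
Definition Lblocks (om : seq bool) : nat :=
  if om == [:: H] then 1%N
  else if om == [:: S; H; S] then 2%N
  else if om == [:: S; H; H] then 2%N
  else (half_len (inner om) + 2)%N.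

Definition won (om : seq bool) : bool :=
  (om == [:: S; H; S]) || (take 2 om == [:: S; S]).

(* Probability of the event E (a set of attack cycles): the countable sum of
   the probabilities of the cycles in E, enumerated by length n.
   prob_term p q E n = total probability of the cycles of length n in E. *)
Definition prob_term {R : realType} (p q : R) (E : pred (seq bool)) (n : nat) : R :=
  \sum_(t : n.-tuple bool | is_cycle t && E t) cycle_prob p q t.

Definition prob_event_is {R : realType} (p q : R) (E : pred (seq bool)) (l : R) : Prop :=
  (fun N => \sum_(0 <= n < N) prob_term p q E n) @ \oo --> l.

Definition catalan {R : realType} (n : nat) : R :=
  ((2 * n)`!)%:R / ((n`!)%:R * ((n.+1)`!)%:R).
Definition catalan_poly {R : realType} (n : nat) (x : R) : R :=
  \sum_(k < n.+1) catalan k * x ^+ k.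

Definition pi_k {R : realType} (p q : R) (k : nat) : R :=
  if (k < 2)%N then 0
  else p * q ^+ 2 * ((k == 2%N)%:R + (p * q) ^+ (k - 2) * catalan (k - 2)).

(* Main.v *)
Require Import Defs.
From HB Require Import structures.
From mathcomp Require Import all_boot all_order all_algebra.
From mathcomp Require Import all_classical all_reals all_analysis.
From mathcomp Require Import zify ring lra.
Import Order.TTheory GRing.Theory Num.Theory.
Local Open Scope ring_scope.


Lemma sum_tuple_cons (V : nmodType) n (F : seq bool -> V) :
  \sum_(t : n.+1.-tuple bool) F t =
  \sum_(t : n.-tuple bool) F (true :: t) + \sum_(t : n.-tuple bool) F (false :: t).
Proof.
have -> : \sum_(t : n.-tuple bool) F (true :: t) + \sum_(t : n.-tuple bool) F (false :: t)
   = \sum_(b : bool) \sum_(t : n.-tuple bool) F (b :: t) by rewrite big_bool.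
rewrite pair_big /=.
rewrite (reindex (fun pr : bool * n.-tuple bool => [tuple of pr.1 :: pr.2])) //=.
exists (fun t : n.+1.-tuple bool => (thead t, [tuple of behead t])).
  by move=> [b t] _ /=; congr pair; apply: val_inj.
by move=> t _; rewrite [in RHS](tuple_eta t).
Qed.

Lemma sum_tuple_rev (V : nmodType) n (F : seq bool -> V) :
  \sum_(t : n.-tuple bool) F t = \sum_(t : n.-tuple bool) F (rev t).
Proof.
rewrite (reindex_inj (h := fun t : n.-tuple bool => [tuple of rev t])) //=.
by move=> t1 t2 /(congr1 val) /= /(congr1 rev); rewrite !revK => /val_inj.
Qed.

Lemma sum_tuple_rcons (V : nmodType) n (F : seq bool -> V) :
  \sum_(t : n.+1.-tuple bool) F t =
  \sum_(t : n.-tuple bool) F (rcons t true) + \sum_(t : n.-tuple bool) F (rcons t false).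
Proof.
rewrite (@sum_tuple_rev V n.+1) (@sum_tuple_cons V n (fun s => F (rev s))).
by congr (_ + _); rewrite (@sum_tuple_rev V n (fun s => F (rcons s _))); apply: eq_bigr => t _; rewrite rev_cons.
Qed.

Lemma sum_tuple0 (V : nmodType) (F : seq bool -> V) :
  \sum_(t : 0.-tuple bool) F t = F [::].
Proof.
rewrite (eq_bigr (fun _ => F [::])); last by move=> t _; rewrite tuple0.
by rewrite sumr_const card_tuple expn0.
Qed.



Section Dy.
Variable R : realType.

Definition D (h n : nat) : R := \sum_(t : n.-tuple bool) (dyck_from h t)%:R.

Lemma D0 h : D h 0 = (h == 0%N)%:R.
Proof. by rewrite /D (@sum_tuple0 _ (fun s => (dyck_from h s)%:R)). Qed.

Lemma DS h n : D h n.+1 = D h.+1 n + (if h is h'.+1 then D h' n else 0).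
Proof.
rewrite /D (@sum_tuple_cons _ n (fun s => (dyck_from h s)%:R)) /=; congr (_ + _).
case: h => [|h] /=; last by [].
by rewrite big1.
Qed.

Lemma D_big n h : (n < h)%N -> D h n = 0.
Proof.
elim: n h => [|n IH] h hn; first by rewrite D0; case: h hn.
rewrite DS IH; last by lia.
case: h hn => [//|h] hn; rewrite IH ?addr0 //; lia.
Qed.

Lemma D_odd n h : odd (n + h) -> D h n = 0.
Proof.
elim: n h => [|n IH] h hn; first by rewrite D0; case: h hn.
rewrite DS IH; last by rewrite addnS -addSn.
case: h hn => [|h] hn; rewrite ?addr0 //.
rewrite IH ?addr0 //.
by move: hn; rewrite addSn addnS /= negbK.
Qed.

Definition Cm (n u : nat) : R := if u is u'.+1 then ('C(n, u'))%:R else 0.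

Lemma D_ballot n u d : (u + d)%N = n -> (u <= d)%N ->
  D (d - u) n = ('C(n, u))%:R - Cm n u.
Proof.
elim: n u d => [|n IH] u d hn hud.
  have [-> ->] : u = 0%N /\ d = 0%N by lia.
  by rewrite D0 /Cm bin0 subr0.
rewrite DS.
case: u hn hud => [|u] hn hud.
  rewrite subn0 D_big; last by lia.
  have -> : d = n.+1 by lia.
  have := IH 0%N n erefl (leq0n n); rewrite subn0 => ->.
  by rewrite /Cm !bin0 !subr0 add0r.
have -> : (d - u.+1).+1 = (d - u)%N by lia.
rewrite (IH u d); [|lia|lia].
case: (ltngtP u.+1 d) hud => // hlt _.
  have -> : (d - u.+1)%N = (d.-1 - u.+1).+1 by lia.
  rewrite (IH u.+1 d.-1); [|lia|lia].
  rewrite binS /Cm.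
  case: u {hn hlt} => [|u]; rewrite ?bin0 ?binS ?natrD; lra.
have -> : (d - u.+1)%N = 0%N by lia.
rewrite addr0 /Cm.
have hb : 'C(n.+1, u.+1) = ('C(n, u.+1) + 'C(n, u))%N by rewrite binS.
have hs : 'C(n, u.+1) = 'C(n, u).
  have -> : u.+1 = (n - u)%N by lia.
  by rewrite bin_sub //; lia.
rewrite hb hs natrD.
case: u {hn hlt hb hs} => [|u]; rewrite ?bin0 ?binS ?natrD; lra.
Qed.

Lemma D_catalan j : D 0 (j + j) = catalan j.
Proof.
rewrite -{1}(subnn j) (@D_ballot (j + j) j j) // /catalan /Cm.
have -> : (2 * j)%N = (j + j)%N by rewrite mul2n addnn.
have hf := bin_fact (leq_addr j j); rewrite addnK in hf.
case: j hf => [|i] hf.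
  by rewrite /= subr0 !mul1r bin0 (_ : 1`! = 1%N) // invr1.
have hb := mul_bin_left (i.+1 + i.+1) i.
rewrite (_ : (i.+1 + i.+1 - i = i.+2)%N) in hb; last by lia.
rewrite -hf factS !natrM.
have f0 : (i.+1)`!%:R != 0 :> R by rewrite pnatr_eq0 -lt0n fact_gt0.
have hb' : ('C(i.+1 + i.+1, i))%:R = (i.+1)%:R * ('C(i.+1 + i.+1, i.+1))%:R / (i.+2)%:R :> R.
  by rewrite -natrM hb natrM mulrC mulKf // pnatr_eq0.
rewrite hb'.
field.
have hi : 0 <= i%:R :> R by rewrite ler0n.
apply/and3P; split; [by rewrite pnatr_eq0 -lt0n fact_gt0 | apply: lt0r_neq0; lra | apply: lt0r_neq0; lra].
Qed.
End Dy.



Section Main.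
Variables (R : realType) (p q : R) (F : pred nat).

Definition G (s : seq bool) : R :=
  if is_cycle s && (won s && F (Lblocks s)) then cycle_prob p q s else 0.

Lemma G_small s : (size s < 3)%N -> G s = 0.
Proof.
move=> hs; rewrite /G.
case: ifP => // /andP [hc /andP [hw _]]; exfalso.
move: hc; rewrite /is_cycle => /or4P [/eqP E|/eqP E|/eqP E|].
- by move: hw; rewrite E.
- by rewrite E in hs.
- by rewrite E in hs.
- by case/and4P => h _ _ _; lia.
Qed.

Lemma G_HH b t : G [:: false, b & t] = 0.
Proof. by rewrite /G /won /=; case: b; rewrite /= !andbF. Qed.

Lemma G_SH t : G [:: true, false & t] = ((t == [:: true]) && F 2)%:R * (p * q ^+ 2).
Proof.
case: (t =P [:: true]) => [->|ht] /=.
  rewrite /G /won /Lblocks /cycle_prob /is_cycle /S /H /=.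
  by case: (F 2); rewrite /= ?mul1r ?mul0r.
rewrite mul0r /G /won /S /H /=.
have -> : ([:: true, false & t] == [:: true; false; true]) = false by apply/eqP => -[].
have -> : ([:: true, false & take 0 t] == [:: true; true]) = false by apply/eqP => -[].
by rewrite andbF.
Qed.

Lemma G_SSS w : G [:: true, true & rcons w true] = 0.
Proof.
rewrite /G /is_cycle /is_SSwH /= last_rcons /=.
by rewrite !andbF.
Qed.

Lemma inner_SS w b : inner [:: true, true & rcons w b] = w.
Proof.
rewrite /inner /= size_rcons -cats1.
have -> : ((size w).+3 - 3 = size w)%N by lia.
by rewrite drop0 take_size_cat.
Qed.

Lemma G_SSH w : G [:: true, true & rcons w false] =
  (dyck w && F (half_len w + 2))%:R * (q ^+ 2 * p * (p * q) ^+ half_len w).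
Proof.
rewrite /G /is_cycle /is_SSwH /= last_rcons inner_SS /=.
rewrite /won /= /Lblocks /cycle_prob /= inner_SS.
rewrite take0 size_rcons /S eqxx /=.
by case: (dyck w && F (half_len w + 2)); rewrite /= ?mul1r ?mul0r.
Qed.


Definition cp (j : nat) : R := q ^+ 2 * p * (p * q) ^+ j.

Lemma sum_SS m : \sum_(t : m.+1.-tuple bool) G [:: true, true & t] =
  D R 0 m * ((F (m./2 + 2))%:R * cp m./2).
Proof.
rewrite (@sum_tuple_rcons _ m (fun s => G [:: true, true & s])).
rewrite big1 ?add0r; last by move=> w _; rewrite G_SSS.
rewrite /D big_distrl /=; apply: eq_bigr => w _.
rewrite G_SSH /half_len size_tuple /cp.
by rewrite /dyck; case: (dyck_from 0 w); case: (F _); rewrite /= ?mul1r ?mul0r.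
Qed.

Lemma sum_SH m : \sum_(t : m.+1.-tuple bool) G [:: true, false & t] =
  ((m == 0%N) && F 2)%:R * (p * q ^+ 2).
Proof.
under eq_bigr do rewrite G_SH.
case: m => [|m].
  rewrite (@sum_tuple_cons _ 0 (fun s => ((s == [:: true]) && F 2)%:R * (p * q ^+ 2))).
  rewrite (@sum_tuple0 _ (fun s => ((true :: s == [:: true]) && F 2)%:R * (p * q ^+ 2))).
  rewrite (@sum_tuple0 _ (fun s => ((false :: s == [:: true]) && F 2)%:R * (p * q ^+ 2))).
  by rewrite /= mul0r addr0.
rewrite /= mul0r big1 // => t _.
have -> : (val t == [:: true]) = false by apply/eqP => ht; have := size_tuple t; rewrite ht.
by rewrite mul0r.
Qed.

Lemma sum_G3 m : \sum_(t : m.+3.-tuple bool) G t =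
  ((m == 0%N) && F 2)%:R * (p * q ^+ 2) + D R 0 m * ((F (m./2 + 2))%:R * cp m./2).
Proof.
rewrite (@sum_tuple_cons _ m.+2 G).
rewrite (@sum_tuple_cons _ m.+1 (fun s => G (true :: s))).
rewrite (@sum_tuple_cons _ m.+1 (fun s => G (false :: s))).
rewrite [\sum_(t : m.+1.-tuple bool) G [:: false, true & t]]big1; last by move=> t _; rewrite G_HH.
by rewrite !addr0 sum_SS sum_SH addrC.

Qed.

Lemma sum_G_small n : (n < 3)%N -> \sum_(t : n.-tuple bool) G t = 0.
Proof. by move=> hn; rewrite big1 // => t _; rewrite G_small // size_tuple. Qed.

End Main.



Section Fin.
Variables (R : realType) (p q : R).

Lemma prob_char (F : pred nat) K (hF : forall x, F x -> (x <= K.+1)%N) n :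
  prob_term p q (fun om => won om && F (Lblocks om)) n =
  ((n == 3%N) && F 2)%:R * (p * q ^+ 2) +
  \sum_(j < K) ((n == j.*2 + 3)%N && F (j + 2)%N)%:R * (catalan j * @cp R p q j).
Proof.
rewrite (_ : prob_term _ _ _ n = \sum_(t : n.-tuple bool) @G R p q F t); last by rewrite /prob_term big_mkcond.
case: (ltnP n 3) => hn.
  rewrite sum_G_small // big1 => [|j _].
    by rewrite (_ : (n == 3%N) = false) ?mul0r ?addr0 //; apply/negbTE/eqP; lia.
  by rewrite (_ : (n == j.*2 + 3)%N = false) ?mul0r //; apply/negbTE/eqP; lia.
have [m ->] : exists m, n = m.+3 by exists (n - 3)%N; lia.
rewrite sum_G3 /=; congr (_ + _).
under eq_bigr => j _ do rewrite addn3 eqSS eqSS eqSS.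
have := odd_double_half m; case ho : (odd m) => /= hm.
  rewrite D_odd ?addn0 // mul0r big1 // => j _.
  rewrite (_ : (m == j.*2) = false) ?mul0r //; apply/negbTE/eqP => e.
  by rewrite e odd_double in ho.
rewrite add0n in hm; rewrite -hm doubleK.
under eq_bigr => j _ do rewrite (inj_eq double_inj).
set i := m./2.
rewrite -addnn D_catalan.
case: (ltnP i K) => hi.
  rewrite (bigD1 (Ordinal hi)) //= eqxx big1 ?addr0 => [|j hj].
    by case: (F (i + 2)%N); rewrite /= ?mul1r ?mul0r ?mulr0 ?mulr1.
  rewrite (_ : (i == j) = false) ?mul0r //; apply/negbTE/eqP => e.
  by move: hj; rewrite -(inj_eq val_inj) /= e eqxx.
have hFi : F (i + 2)%N = false by apply/negbTE/negP => /hF; lia.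
rewrite hFi mul0r mulr0 big1 // => j _.
rewrite (_ : (i == j) = false) ?mul0r //; apply/negbTE/eqP => e.
have := ltn_ord j; lia.
Qed.

Lemma sum_ind N i (b : bool) (x : R) : (i < N)%N ->
  \sum_(0 <= n < N) ((n == i) && b)%:R * x = b%:R * x.
Proof.
move=> hi; rewrite big_mkord (bigD1 (Ordinal hi)) //= eqxx big1 ?addr0 // => j hj.
rewrite (_ : (val j == i) = false) ?mul0r //; apply/negbTE/eqP => e.
by move: hj; rewrite -(inj_eq val_inj) /= e eqxx.
Qed.

Lemma psum (F : pred nat) K (hF : forall x, F x -> (x <= K.+1)%N) N :
  (K.*2 + 3 < N)%N -> (3 < N)%N ->
  \sum_(0 <= n < N) prob_term p q (fun om => won om && F (Lblocks om)) n =
  (F 2)%:R * (p * q ^+ 2) + \sum_(j < K) (F (j + 2)%N)%:R * (catalan j * @cp R p q j).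
Proof.
move=> hN h3.
under eq_bigr => n _ do rewrite (@prob_char F K hF).
rewrite big_split /= sum_ind //; congr (_ + _).
rewrite exchange_big /=; apply: eq_bigr => j _.
apply: sum_ind.
have := ltn_ord j; lia.
Qed.

End Fin.

Theorem lemma1 (R : realType) (p q : R) (hq : 0 < q) (hqp : q < p) (hpq : p + q = 1) :
  (forall k : nat,
     prob_event_is p q (fun om => won om && (Lblocks om == k)) (pi_k p q k)) /\
  (forall k : nat, (2 <= k)%N ->
     prob_event_is p q (fun om => won om && (Lblocks om <= k)%N)
       (p * q ^+ 2 + p * q ^+ 2 * catalan_poly (k - 2) (p * q))).
Proof.
split.
  move=> k; rewrite /prob_event_is; apply: cvg_near_cst.
  exists (k.*2 + 4)%N => // N /= hN.
  have := @psum R p q (fun x => x == k) k.-1 _ N.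
  move=> /= ->; [|by move=> x /eqP; lia|lia|lia].
  rewrite /pi_k.
  case: k hN => [|[|k]] hN /=.
  - by rewrite big_ord0 mul0r addr0.
  - by rewrite big_ord0 mul0r addr0.
  rewrite big_ord_recr /= big1 ?add0r => [|j _].
    rewrite (_ : (k + 2 == k.+2)%N = true); last by apply/eqP; lia.
    rewrite subn2 /= /cp.
    rewrite [(2 == _)%N]eq_sym; ring.
  rewrite (_ : (j + 2 == k.+2)%N = false) ?mul0r //; apply/negbTE/eqP.
  have := ltn_ord j; lia.
move=> k hk; rewrite /prob_event_is; apply: cvg_near_cst.
exists (k.*2 + 4)%N => // N /= hN.
have := @psum R p q (fun x => (x <= k)%N) k.-1 _ N.
move=> /= ->; [|by move=> x; lia|lia|lia].
rewrite hk mul1r /catalan_poly big_distrr /=.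
have -> : k.-1 = (k - 2).+1 by lia.
congr (_ + _); apply: eq_bigr => j _.
rewrite (_ : (j + 2 <= k)%N = true); last by have := ltn_ord j; lia.
rewrite /cp.
rewrite mul1r; ring.
Qed.
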